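(* Let $\mu>1$, $\gamma=\mu\gamma^N_1$, and let $(\rho_k)_{k\ge1}$ be an increasing positive sequence with $K_{4/3}<\infty$. There exist constants $A_1<\infty$ and $\delta_0>0$ such that for all $N\ge3$, all $0<\delta<\delta_0$ and all $z\in C_\delta$, $$\big|\widetilde G_N(z)-F_0(z)\big|\le A_1\delta^4,\qquad\text{where } F_0(z)=\tfrac12\sum_{k=0}^{N-1}\lambda_{k,N}|z_k|^2.$$
   Context: Indices modulo $N$; $F_{\gamma,N}(x)=\sum_{i=0}^{N-1}(\tfrac14x_i^4-\tfrac12x_i^2)+\tfrac\gamma4\sum_{i=0}^{N-1}(x_i-x_{i+1})^2$; $\gamma^N_1=\frac1{2\sin^2(\pi/N)}$; $G_N=N^{-1}F_{\gamma,N}$; $\lambda_{k,N}=-1+2\gamma\sin^2(k\pi/N)$. $\omega=e^{2\pi i/N}$; $\widehat{\mathbb{R}}^N=\{z\in\mathbb{C}^N:z_k=\overline{z_{N-k}}\}$; $x_j(Nz)=\sum_{k=0}^{N-1}\omega^{jk}z_k$; $\widetilde G_N(z)=G_N(x(Nz))$, which equals $\tfrac12\sum_k\lambda_{k,N}|z_k|^2+\frac1{4N}\|x(Nz)\|_4^4$. Given increasing positive $(\rho_k)_{k\ge1}$: $r_{0,N}=1$, $r_{k,N}=r_{N-k,N}=\rho_k$ ($1\le k\le\lfloor N/2\rfloor$), $K_p=(\sum_{k\ge1}\rho_k^p/k^p)^{1/p}$, $C_\delta=\{z\in\widehat{\mathbb{R}}^N:|z_k|\le\delta r_{k,N}/\sqrt{|\lambda_{k,N}|},\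 0\le k\le N-1\}$. *)

(* Defs.v *)
From Stdlib Require Import Reals Lra Lia.
Open Scope R_scope.

Fixpoint rsum (n : nat) (f : nat -> R) : R :=
  match n with
  | O => 0
  | S m => rsum m f + f m
  end.

Definition F_energy (gamma : R) (N : nat) (x : nat -> R) : R :=
  rsum N (fun i => / 4 * x i ^ 4 - / 2 * x i ^ 2)
  + gamma / 4 * rsum N (fun i => (x i - x ((S i) mod N)%nat) ^ 2).

Definition gamma1 (N : nat) : R := / (2 * (sin (PI / INR N)) ^ 2).

Definition G_N (gamma : R) (N : nat) (x : nat -> R) : R := / INR N * F_energy gamma N x.

Definition lam (gamma : R) (N k : nat) : R := -1 + 2 * gamma * (sin (INR k * PI / INR N)) ^ 2.

(* A complex vector z in C^N is given by its real part zr and imaginary part zi,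
   indexed by 0..N-1.  Membership in \widehat{R}^N : z_k = conj(z_{N-k}) (indices mod N). *)
Definition in_hatR (N : nat) (zr zi : nat -> R) : Prop :=
  forall k : nat, (k < N)%nat ->
    zr k = zr ((N - k) mod N)%nat /\ zi k = - zi ((N - k) mod N)%nat.

(* x_j(Nz) = sum_k omega^{jk} z_k, omega = e^{2 pi i/N}.  For z in \widehat{R}^N this
   sum is real; we take its real part:  Re(omega^{jk} z_k) = cos(.) zr_k - sin(.) zi_k. *)
Definition xofz (N : nat) (zr zi : nat -> R) (j : nat) : R :=
  rsum N (fun k => cos (2 * PI * INR j * INR k / INR N) * zr k
                 - sin (2 * PI * INR j * INR k / INR N) * zi k).

Definition Gtilde (gamma : R) (N : nat) (zr zi : nat -> R) : R :=
  G_N gamma N (xofz N zr zi).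

Definition cabs2 (zr zi : nat -> R) (k : nat) : R := zr k ^ 2 + zi k ^ 2.

Definition F0 (gamma : R) (N : nat) (zr zi : nat -> R) : R :=
  / 2 * rsum N (fun k => lam gamma N k * cabs2 zr zi k).

Definition rkN (rho : nat -> R) (N k : nat) : R :=
  if Nat.eqb k 0 then 1
  else if Nat.leb k (N / 2) then rho k else rho (N - k)%nat.

Definition in_Cdelta (gamma : R) (rho : nat -> R) (N : nat) (delta : R)
    (zr zi : nat -> R) : Prop :=
  in_hatR N zr zi /\
  forall k : nat, (k < N)%nat ->
    sqrt (cabs2 zr zi k) <= delta * rkN rho N k / sqrt (Rabs (lam gamma N k)).

Definition K_finite (p : R) (rho : nat -> R) : Prop :=
  exists l : R, Un_cv (fun n => sum_f_R0 (fun k => Rpower (rho (S k) / INR (S k)) p) n) l.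

(* Main.v *)
Require Import Defs.
From Stdlib Require Import Reals Lra Lia ZArith.
Open Scope R_scope.

Lemma rsum_ext n f g : (forall k, (k < n)%nat -> f k = g k) -> rsum n f = rsum n g.
Proof. induction n; simpl; intros H; [reflexivity|]. rewrite IHn by (intros; apply H; lia). rewrite H by lia; reflexivity. Qed.

Lemma rsum_le n f g : (forall k, (k < n)%nat -> f k <= g k) -> rsum n f <= rsum n g.
Proof. induction n; simpl; intros H; [lra|]. specialize (IHn (fun k Hk => H k ltac:(lia))). specialize (H n ltac:(lia)). lra. Qed.

Lemma rsum_nonneg n f : (forall k, (k < n)%nat -> 0 <= f k) -> 0 <= rsum n f.
Proof. intros H. replace 0 with (rsum n (fun _ => 0)). apply rsum_le; auto. induction n; simpl; auto. rewrite IHn; [lra|intros; apply H; lia]. Qed.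

Lemma rsum_zero n : rsum n (fun _ => 0) = 0.
Proof. induction n; simpl; [lra|]; rewrite IHn; lra. Qed.

Lemma rsum_plus n f g : rsum n (fun k => f k + g k) = rsum n f + rsum n g.
Proof. induction n; simpl; [lra|]; rewrite IHn; lra. Qed.

Lemma rsum_minus n f g : rsum n (fun k => f k - g k) = rsum n f - rsum n g.
Proof. induction n; simpl; [lra|]; rewrite IHn; lra. Qed.

Lemma rsum_scal n c f : rsum n (fun k => c * f k) = c * rsum n f.
Proof. induction n; simpl; [ring|]; rewrite IHn; ring. Qed.

Lemma rsum_opp n f : rsum n (fun k => - f k) = - rsum n f.
Proof. induction n; simpl; [ring|]; rewrite IHn; ring. Qed.

Lemma rsum_mult n m f g : rsum n f * rsum m g = rsum n (fun k => rsum m (fun l => f k * g l)).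
Proof.
  induction n; simpl; [ring|]. rewrite Rmult_plus_distr_r, IHn. f_equal.
  rewrite <- rsum_scal. reflexivity.
Qed.

Lemma rsum_swap n m f : rsum n (fun k => rsum m (fun l => f k l)) = rsum m (fun l => rsum n (fun k => f k l)).
Proof.
  induction n; simpl. { now rewrite rsum_zero. }
  rewrite IHn, <- rsum_plus. reflexivity.
Qed.

Lemma rsum_shift n f : rsum (S n) f = f 0%nat + rsum n (fun k => f (S k)).
Proof. induction n; simpl in *; [ring|]. rewrite IHn; ring. Qed.

Lemma rsum_rev n f : rsum n f = rsum n (fun k => f (n - 1 - k)%nat).
Proof.
  induction n; [reflexivity|].
  rewrite (rsum_shift n (fun k => f (S n - 1 - k)%nat)).
  simpl rsum at 1. rewrite IHn. replace (S n - 1 - 0)%nat with n by lia.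
  rewrite Rplus_comm. f_equal. apply rsum_ext; intros; f_equal; lia.
Qed.

Lemma rsum_delta n k g : (k < n)%nat -> rsum n (fun l => if Nat.eq_dec k l then g l else 0) = g k.
Proof.
  induction n; intros H; [lia|]. simpl. destruct (Nat.eq_dec k n).
  - subst. rewrite (rsum_ext _ _ (fun _ => 0)), rsum_zero; [ring|].
    intros l Hl; destruct (Nat.eq_dec n l); [lia|auto].
  - rewrite IHn by lia. ring.
Qed.

Lemma rsum_tele n g : rsum n (fun j => g (S j) - g j) = g n - g 0%nat.
Proof. induction n; simpl; [ring|]. rewrite IHn; ring. Qed.

Lemma sin_perZ x z : sin (x + 2 * IZR z * PI) = sin x.
Proof.
  destruct z as [|p|p].
  - simpl. f_equal; ring.
  - rewrite <- (positive_nat_Z p), <- INR_IZR_INZ. apply sin_period.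
  - replace (IZR (Z.neg p)) with (- INR (Pos.to_nat p)).
    + rewrite <- (sin_period (x + 2 * - INR (Pos.to_nat p) * PI) (Pos.to_nat p)). f_equal; ring.
    + rewrite INR_IZR_INZ, positive_nat_Z. rewrite <- Ropp_Ropp_IZR. reflexivity.
Qed.

Lemma cos_perZ x z : cos (x + 2 * IZR z * PI) = cos x.
Proof.
  destruct z as [|p|p].
  - simpl. f_equal; ring.
  - rewrite <- (positive_nat_Z p), <- INR_IZR_INZ. apply cos_period.
  - replace (IZR (Z.neg p)) with (- INR (Pos.to_nat p)).
    + rewrite <- (cos_period (x + 2 * - INR (Pos.to_nat p) * PI) (Pos.to_nat p)). f_equal; ring.
    + rewrite INR_IZR_INZ, positive_nat_Z. rewrite <- Ropp_Ropp_IZR. reflexivity.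
Qed.

Lemma orth_gen N th m : INR N * th = 2 * IZR m * PI -> sin (th / 2) <> 0 ->
  rsum N (fun j => cos (INR j * th)) = 0 /\ rsum N (fun j => sin (INR j * th)) = 0.
Proof.
  intros HN Hs. split.
  - apply (Rmult_eq_reg_l (2 * sin (th/2))); [| intro; apply Hs; lra].
    rewrite <- rsum_scal, Rmult_0_r.
    rewrite (rsum_ext _ _ (fun j => (fun j => sin (INR j * th - th/2)) (S j) - (fun j => sin (INR j * th - th/2)) j)).
    + rewrite (rsum_tele N (fun j => sin (INR j * th - th/2))). simpl. replace (INR N * th - th / 2) with (- (th/2) + 2 * IZR m * PI) by lra.
      rewrite sin_perZ. replace (0 * th - th/2) with (- (th/2)) by ring. ring.
    + intros j _. cbv beta. rewrite S_INR.
      replace ((INR j + 1) * th - th / 2) with (INR j * th + th/2) by field.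
      rewrite sin_plus, sin_minus. ring.
  - apply (Rmult_eq_reg_l (2 * sin (th/2))); [| intro; apply Hs; lra].
    rewrite <- rsum_scal, Rmult_0_r.
    rewrite (rsum_ext _ _ (fun j => (fun j => - cos (INR j * th - th/2)) (S j) - (fun j => - cos (INR j * th - th/2)) j)).
    + rewrite (rsum_tele N (fun j => - cos (INR j * th - th/2))). simpl. replace (INR N * th - th / 2) with (- (th/2) + 2 * IZR m * PI) by lra.
      rewrite cos_perZ. replace (0 * th - th/2) with (- (th/2)) by ring. ring.
    + intros j _. cbv beta. rewrite S_INR.
      replace ((INR j + 1) * th - th / 2) with (INR j * th + th/2) by field.
      rewrite cos_plus, cos_minus. ring.
Qed.

Definition indN (N : nat) (m : Z) : R := if Z.eqb (Z.modulo m (Z.of_nat N)) 0 then 1 else 0.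

Lemma orth N m : (0 < N)%nat ->
  rsum N (fun j => cos (2 * PI * INR j * IZR m / INR N)) = INR N * indN N m /\
  rsum N (fun j => sin (2 * PI * INR j * IZR m / INR N)) = 0.
Proof.
  intros HN. assert (HNR : 0 < INR N) by (apply lt_0_INR; auto).
  unfold indN. destruct (Z.eqb_spec (m mod Z.of_nat N) 0) as [E|E].
  - apply Z.mod_divide in E; [|lia]. destruct E as [q Hq]. subst m.
    assert (Hc : forall j, 2 * PI * INR j * IZR (q * Z.of_nat N) / INR N = 0 + 2 * IZR (Z.of_nat j * q) * PI).
    { intros j. rewrite !mult_IZR, <- !INR_IZR_INZ. field. lra. }
    split.
    + rewrite (rsum_ext _ _ (fun _ => 1)).
      * clear. rewrite Rmult_1_r. induction N; simpl; [auto|]. rewrite IHN. destruct N; simpl; ring.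
      * intros j _. rewrite Hc, cos_perZ, cos_0; auto.
    + rewrite (rsum_ext _ _ (fun _ => 0)). apply rsum_zero.
      intros j _. rewrite Hc, sin_perZ, sin_0; auto.
  - set (th := 2 * PI * IZR m / INR N).
    assert (Hs : sin (th / 2) <> 0).
    { intro H0. apply sin_eq_0_0 in H0. destruct H0 as [k Hk]. apply E.
      apply Z.mod_divide; [lia|]. exists k. apply eq_IZR. rewrite mult_IZR, <- INR_IZR_INZ.
      unfold th in Hk. assert (PI > 0) by apply PI_RGT_0.
      apply (Rmult_eq_reg_r (PI / INR N)); [|apply Rgt_not_eq; apply Rdiv_lt_0_compat; lra].
      transitivity (th/2). { unfold th; field; lra. } unfold th; rewrite Hk. field. lra. }
    destruct (orth_gen N th m) as [H1 H2]; auto.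
    { unfold th. field. lra. }
    rewrite Rmult_0_r. split.
    + rewrite <- H1. apply rsum_ext; intros; f_equal; unfold th; field; lra.
    + rewrite <- H2. apply rsum_ext; intros; f_equal; unfold th; field; lra.
Qed.

Definition ang (N j : nat) (m : Z) : R := 2 * PI * INR j * IZR m / INR N.
Definition cc (N j k : nat) := cos (2 * PI * INR j * INR k / INR N).
Definition ss (N j k : nat) := sin (2 * PI * INR j * INR k / INR N).
Definition Cj N (wr wi : nat -> R) j := rsum N (fun k => cc N j k * wr k - ss N j k * wi k).
Definition Sj N (wr wi : nat -> R) j := rsum N (fun k => ss N j k * wr k + cc N j k * wi k).
Definition AA (wr wi : nat -> R) k l := wr k * wr l + wi k * wi l.
Definition BB (wr wi : nat -> R) k l := wr k * wi l - wi k * wr l.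
Definition dz (k l : nat) : Z := (Z.of_nat k - Z.of_nat l)%Z.
Definition QQ N wr wi j k l := cos (ang N j (dz k l)) * AA wr wi k l + sin (ang N j (dz k l)) * BB wr wi k l.

Lemma ang_dz N j k l : (0 < N)%nat -> ang N j (dz k l) = 2 * PI * INR j * INR k / INR N - 2 * PI * INR j * INR l / INR N.
Proof. intros H. assert (0 < INR N) by (apply lt_0_INR; auto). unfold ang, dz. rewrite minus_IZR, <- !INR_IZR_INZ. field. lra. Qed.

Lemma modsq N wr wi j : (0 < N)%nat ->
  Cj N wr wi j ^ 2 + Sj N wr wi j ^ 2 = rsum N (fun k => rsum N (fun l => QQ N wr wi j k l)).
Proof.
  intros HN. unfold Cj, Sj. simpl. rewrite !Rmult_1_r, !rsum_mult, <- rsum_plus.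
  apply rsum_ext; intros k _. rewrite <- rsum_plus. apply rsum_ext; intros l _.
  unfold QQ, AA, BB, cc, ss. rewrite ang_dz by auto. rewrite cos_minus, sin_minus. ring.
Qed.

Lemma ind_diff N k l : (k < N)%nat -> (l < N)%nat -> indN N (dz k l) = if Nat.eq_dec k l then 1 else 0.
Proof.
  intros Hk Hl. unfold indN, dz. destruct (Z.eqb_spec ((Z.of_nat k - Z.of_nat l) mod Z.of_nat N) 0) as [E|E];
  destruct (Nat.eq_dec k l) as [e|e]; auto.
  - apply Z.mod_divide in E; [|lia]. destruct E as [q Hq]. exfalso. destruct (Z.lt_trichotomy q 0) as [Hq0|[Hq0|Hq0]]; [nia|subst; lia|nia].
  - subst. rewrite Z.sub_diag, Z.mod_0_l in E; lia.
Qed.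

Lemma sumj_QQ N wr wi k l : (0 < N)%nat ->
  rsum N (fun j => QQ N wr wi j k l) = INR N * indN N (dz k l) * AA wr wi k l.
Proof.
  intros HN. unfold QQ. rewrite rsum_plus.
  rewrite (rsum_ext _ _ (fun j => AA wr wi k l * cos (ang N j (dz k l)))) by (intros; ring).
  rewrite (rsum_ext _ (fun j => sin _ * _) (fun j => BB wr wi k l * sin (ang N j (dz k l)))) by (intros; ring).
  rewrite !rsum_scal. unfold ang. destruct (orth N (dz k l) HN) as [H1 H2]. rewrite H1, H2. ring.
Qed.

Lemma parseval N wr wi : (0 < N)%nat ->
  rsum N (fun j => Cj N wr wi j ^ 2 + Sj N wr wi j ^ 2) = INR N * rsum N (fun k => wr k ^ 2 + wi k ^ 2).
Proof.
  intros HN. rewrite (rsum_ext _ _ (fun j => rsum N (fun k => rsum N (fun l => QQ N wr wi j k l)))) by (intros; apply modsq; auto).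
  rewrite rsum_swap, <- rsum_scal. apply rsum_ext; intros k Hk.
  rewrite rsum_swap.
  rewrite (rsum_ext _ _ (fun l => if Nat.eq_dec k l then INR N * AA wr wi l l else 0)).
  - rewrite rsum_delta by auto. unfold AA. ring.
  - intros l Hl. rewrite sumj_QQ, ind_diff by auto. destruct (Nat.eq_dec k l); [subst|]; ring.
Qed.

Definition fn (wr wi : nat -> R) k := sqrt (wr k ^ 2 + wi k ^ 2).

Lemma fn_nonneg wr wi k : 0 <= fn wr wi k.
Proof. apply sqrt_pos. Qed.

Lemma AB_bound wr wi k l : Rabs (AA wr wi k l) <= fn wr wi k * fn wr wi l /\ Rabs (BB wr wi k l) <= fn wr wi k * fn wr wi l.
Proof.
  assert (E : (fn wr wi k * fn wr wi l)² = (AA wr wi k l)² + (BB wr wi k l)²).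
  { unfold fn, Rsqr. replace (sqrt (wr k ^ 2 + wi k ^ 2) * sqrt (wr l ^ 2 + wi l ^ 2) *
      (sqrt (wr k ^ 2 + wi k ^ 2) * sqrt (wr l ^ 2 + wi l ^ 2))) with
      ((sqrt (wr k ^ 2 + wi k ^ 2) * sqrt (wr k ^ 2 + wi k ^ 2)) * (sqrt (wr l ^ 2 + wi l ^ 2) * sqrt (wr l ^ 2 + wi l ^ 2))) by ring.
    rewrite !sqrt_sqrt by nra. unfold AA, BB. ring. }
  assert (P : 0 <= fn wr wi k * fn wr wi l) by (apply Rmult_le_pos; apply fn_nonneg).
  split; rewrite <- (Rabs_pos_eq _ P); apply Rsqr_le_abs_0; rewrite E; pose proof (Rle_0_sqr (AA wr wi k l)); pose proof (Rle_0_sqr (BB wr wi k l)); lra.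
Qed.

Lemma ang_add N j a b : (0 < N)%nat -> ang N j (a + b) = ang N j a + ang N j b.
Proof. intros H. assert (0 < INR N) by (apply lt_0_INR; auto). unfold ang. rewrite plus_IZR. field. lra. Qed.
Lemma ang_sub N j a b : (0 < N)%nat -> ang N j (a - b) = ang N j a - ang N j b.
Proof. intros H. assert (0 < INR N) by (apply lt_0_INR; auto). unfold ang. rewrite minus_IZR. field. lra. Qed.

Lemma sumj_QQ2 N wr wi k l k' l' : (0 < N)%nat ->
  rsum N (fun j => QQ N wr wi j k l * QQ N wr wi j k' l') =
  / 2 * INR N * (indN N (dz k l + dz k' l') * (AA wr wi k l * AA wr wi k' l' - BB wr wi k l * BB wr wi k' l')
                 + indN N (dz k l - dz k' l') * (AA wr wi k l * AA wr wi k' l' + BB wr wi k l * BB wr wi k' l')).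
Proof.
  intros HN. set (A := AA wr wi k l). set (B := BB wr wi k l). set (A' := AA wr wi k' l'). set (B' := BB wr wi k' l').
  rewrite (rsum_ext _ _ (fun j => / 2 * (A * A' - B * B') * cos (ang N j (dz k l + dz k' l'))
     + / 2 * (A * A' + B * B') * cos (ang N j (dz k l - dz k' l'))
     + / 2 * (A * B' + B * A') * sin (ang N j (dz k l + dz k' l'))
     + / 2 * (B * A' - A * B') * sin (ang N j (dz k l - dz k' l')))).
  - rewrite !rsum_plus, !rsum_scal. unfold ang.
    destruct (orth N (dz k l + dz k' l') HN) as [H1 H2]. destruct (orth N (dz k l - dz k' l') HN) as [H3 H4].
    rewrite H1, H2, H3, H4. ring.
  - intros j _. unfold QQ. fold A B A' B'. rewrite ang_add, ang_sub by auto.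
    rewrite cos_plus, cos_minus, sin_plus, sin_minus. field.
Qed.

Lemma indN_nonneg N m : 0 <= indN N m.
Proof. unfold indN. destruct (_ =? _)%Z; lra. Qed.

Lemma quartic N wr wi : (0 < N)%nat ->
  rsum N (fun j => (Cj N wr wi j ^ 2 + Sj N wr wi j ^ 2) ^ 2) <=
  INR N * rsum N (fun k => rsum N (fun k' => rsum N (fun l => rsum N (fun l' =>
     (indN N (dz k l + dz k' l') + indN N (dz k l - dz k' l')) * (fn wr wi k * fn wr wi k' * fn wr wi l * fn wr wi l'))))).
Proof.
  intros HN.
  rewrite (rsum_ext _ _ (fun j => rsum N (fun k => rsum N (fun k' => rsum N (fun l => rsum N (fun l' =>
      QQ N wr wi j k l * QQ N wr wi j k' l')))))).
  2:{ intros j _. rewrite modsq by auto. simpl. rewrite Rmult_1_r, rsum_mult.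
      apply rsum_ext; intros k _. apply rsum_ext; intros k' _. apply rsum_mult. }
  rewrite rsum_swap, <- rsum_scal. apply rsum_le; intros k _.
  rewrite rsum_swap, <- rsum_scal. apply rsum_le; intros k' _.
  rewrite rsum_swap, <- rsum_scal. apply rsum_le; intros l _.
  rewrite rsum_swap, <- rsum_scal. apply rsum_le; intros l' _.
  rewrite sumj_QQ2 by auto.
  destruct (AB_bound wr wi k l) as [Ha Hb]. destruct (AB_bound wr wi k' l') as [Ha' Hb'].
  set (A := AA wr wi k l) in *. set (B := BB wr wi k l) in *. set (A' := AA wr wi k' l') in *. set (B' := BB wr wi k' l') in *.
  set (P := fn wr wi k * fn wr wi k' * fn wr wi l * fn wr wi l').
  assert (H1 : Rabs (A * A') <= fn wr wi k * fn wr wi l * (fn wr wi k' * fn wr wi l')).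
  { rewrite Rabs_mult. apply Rmult_le_compat; auto using Rabs_pos. }
  assert (H2 : Rabs (B * B') <= fn wr wi k * fn wr wi l * (fn wr wi k' * fn wr wi l')).
  { rewrite Rabs_mult. apply Rmult_le_compat; auto using Rabs_pos. }
  replace (fn wr wi k * fn wr wi l * (fn wr wi k' * fn wr wi l')) with P in H1, H2 by (unfold P; ring).
  pose proof (Rle_abs (A * A')). pose proof (Rle_abs (B * B')).
  assert (- (A * A') <= Rabs (A * A')) by (rewrite <- Rabs_Ropp; apply Rle_abs). assert (- (B * B') <= Rabs (B * B')) by (rewrite <- Rabs_Ropp; apply Rle_abs).
  pose proof (indN_nonneg N (dz k l + dz k' l')). pose proof (indN_nonneg N (dz k l - dz k' l')).
  assert (HN' : 0 < INR N) by (apply lt_0_INR; auto).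
  set (i1 := indN N (dz k l + dz k' l')) in *. set (i2 := indN N (dz k l - dz k' l')) in *.
  assert (i1 * (A * A' - B * B') <= i1 * (2 * P)) by (apply Rmult_le_compat_l; lra).
  assert (i2 * (A * A' + B * B') <= i2 * (2 * P)) by (apply Rmult_le_compat_l; lra).
  match goal with |- _ <= ?r => replace r with (INR N * ((i1 + i2) * P)) by (unfold P; ring) end.
  rewrite Rmult_assoc, (Rmult_comm (/2)), Rmult_assoc. apply Rmult_le_compat_l; lra.
Qed.

Definition R4 N (G : nat -> nat -> nat -> nat -> R) :=
  rsum N (fun a => rsum N (fun b => rsum N (fun c => rsum N (fun d => G a b c d)))).

Lemma R4_le N G H : (forall a b c d, (a < N)%nat -> (b < N)%nat -> (c < N)%nat -> (d < N)%nat -> G a b c d <= H a b c d) -> R4 N G <= R4 N H.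
Proof. intros X. unfold R4. repeat (apply rsum_le; intros). auto. Qed.

Lemma R4_plus N G H : R4 N (fun a b c d => G a b c d + H a b c d) = R4 N G + R4 N H.
Proof. unfold R4. rewrite <- rsum_plus. repeat (apply rsum_ext; intros; rewrite <- rsum_plus). reflexivity. Qed.

Lemma R4_scal N r G : R4 N (fun a b c d => r * G a b c d) = r * R4 N G.
Proof. unfold R4. rewrite <- rsum_scal. repeat (apply rsum_ext; intros; rewrite <- rsum_scal). reflexivity. Qed.

Lemma cube_sum N g : rsum N (fun a => rsum N (fun b => rsum N (fun c => g a * g b * g c))) = rsum N g ^ 3.
Proof.
  replace (rsum N g ^ 3) with (rsum N g * (rsum N g * rsum N g)) by ring.
  rewrite Rmult_comm, <- rsum_scal. apply rsum_ext; intros a _.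
  rewrite Rmult_comm, rsum_mult, <- rsum_scal. apply rsum_ext; intros b _. rewrite <- rsum_scal. apply rsum_ext; intros; ring.
Qed.

Lemma pow4_le X Y : 0 <= X -> 0 <= Y -> X ^ 4 <= Y ^ 4 -> X <= Y.
Proof.
  intros HX HY H. destruct (Rle_lt_dec X Y) as [|L]; auto.
  assert (Y * Y < X * X) by nra. assert ((Y*Y)*(Y*Y) < (X*X)*(X*X)) by nra. simpl in H. nra.
Qed.

Lemma amgm4 Fa Fb Fc Fd ha hb hc hd : 0 <= Fa -> 0 <= Fb -> 0 <= Fc -> 0 <= Fd ->
  ha ^ 3 = Fa ^ 2 -> hb ^ 3 = Fb ^ 2 -> hc ^ 3 = Fc ^ 2 -> hd ^ 3 = Fd ^ 2 ->
  Fa * Fb * Fc * Fd <= / 4 * ((ha*hb*hc)^2 + (ha*hb*hd)^2 + (ha*hc*hd)^2 + (hb*hc*hd)^2).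
Proof.
  intros. set (p1 := (ha*hb*hc)^2). set (p2 := (ha*hb*hd)^2). set (p3 := (ha*hc*hd)^2). set (p4 := (hb*hc*hd)^2).
  assert (E : (Fa*Fb*Fc*Fd)^4 = p1*p2*p3*p4).
  { unfold p1, p2, p3, p4.
    replace ((Fa*Fb*Fc*Fd)^4) with ((Fa^2)^2*(Fb^2)^2*(Fc^2)^2*(Fd^2)^2) by ring.
    rewrite <- H3, <- H4, <- H5, <- H6. ring. }
  assert (0 <= p1) by apply pow2_ge_0. assert (0 <= p2) by apply pow2_ge_0.
  assert (0 <= p3) by apply pow2_ge_0. assert (0 <= p4) by apply pow2_ge_0.
  apply pow4_le.
  - repeat apply Rmult_le_pos; auto.
  - lra.
  - rewrite E. set (s := (p1+p2)/2). set (t := (p3+p4)/2).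
    assert (p1*p2 <= s*s) by (unfold s; pose proof (pow2_ge_0 (p1-p2)); nra).
    assert (p3*p4 <= t*t) by (unfold t; pose proof (pow2_ge_0 (p3-p4)); nra).
    assert (s*t <= ((s+t)/2)*((s+t)/2)) by (pose proof (pow2_ge_0 (s-t)); nra).
    assert (0 <= s) by (unfold s; lra). assert (0 <= t) by (unfold t; lra).
    replace (/4 * (p1+p2+p3+p4)) with ((s+t)/2) by (unfold s, t; field).
    assert (p1*p2*(p3*p4) <= (s*s)*(t*t)) by (apply Rmult_le_compat; nra).
    assert ((s*s)*(t*t) = (s*t)*(s*t)) by ring.
    assert ((s*t)*(s*t) <= (((s+t)/2)*((s+t)/2))*(((s+t)/2)*((s+t)/2))) by (apply Rmult_le_compat; nra).
    simpl. nra.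
Qed.

Lemma inner_le N (q : nat -> R) p : (0 <= p) -> rsum N q <= 1 -> rsum N (fun x => q x * p) <= p.
Proof.
  intros Hp Hq. rewrite (rsum_ext _ _ (fun x => p * q x)) by (intros; ring). rewrite rsum_scal. nra.
Qed.

Lemma young N (Q : nat -> nat -> nat -> nat -> R) (F h : nat -> R) :
  (forall a b c d, 0 <= Q a b c d) ->
  (forall a b c, (a < N)%nat -> (b < N)%nat -> (c < N)%nat -> rsum N (fun d => Q a b c d) <= 1) ->
  (forall a b d, (a < N)%nat -> (b < N)%nat -> (d < N)%nat -> rsum N (fun c => Q a b c d) <= 1) ->
  (forall a c d, (a < N)%nat -> (c < N)%nat -> (d < N)%nat -> rsum N (fun b => Q a b c d) <= 1) ->
  (forall b c d, (b < N)%nat -> (c < N)%nat -> (d < N)%nat -> rsum N (fun a => Q a b c d) <= 1) ->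
  (forall k, 0 <= F k) -> (forall k, h k ^ 3 = F k ^ 2) ->
  R4 N (fun a b c d => Q a b c d * (F a * F b * F c * F d)) <= rsum N (fun k => h k ^ 2) ^ 3.
Proof.
  intros HQ Hd Hc Hb Ha HF Hh.
  set (g := fun k => h k ^ 2).
  assert (Hg : forall k, 0 <= g k) by (intros; apply pow2_ge_0).
  eapply Rle_trans.
  { apply (R4_le N _ (fun a b c d => / 4 * (Q a b c d * (g a * g b * g c) + Q a b c d * (g a * g b * g d)
        + Q a b c d * (g a * g c * g d) + Q a b c d * (g b * g c * g d)))).
    intros a b c d _ _ _ _.
    replace (/ 4 * (Q a b c d * (g a * g b * g c) + Q a b c d * (g a * g b * g d) + Q a b c d * (g a * g c * g d) + Q a b c d * (g b * g c * g d)))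
      with (Q a b c d * (/4 * ((h a*h b*h c)^2 + (h a*h b*h d)^2 + (h a*h c*h d)^2 + (h b*h c*h d)^2))) by (unfold g; ring).
    apply Rmult_le_compat_l; auto. apply amgm4; auto. }
  rewrite R4_scal, !R4_plus.
  assert (T1 : R4 N (fun a b c d => Q a b c d * (g a * g b * g c)) <= rsum N g ^ 3).
  { rewrite <- cube_sum. unfold R4. repeat (apply rsum_le; intros). apply inner_le; auto.
    apply Rmult_le_pos; [apply Rmult_le_pos|]; auto. }
  assert (T2 : R4 N (fun a b c d => Q a b c d * (g a * g b * g d)) <= rsum N g ^ 3).
  { rewrite <- cube_sum. unfold R4. apply rsum_le; intros a Ha'. apply rsum_le; intros b Hb'.
    rewrite rsum_swap. apply rsum_le; intros d Hd'. apply inner_le; auto.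
    apply Rmult_le_pos; [apply Rmult_le_pos|]; auto. }
  assert (T3 : R4 N (fun a b c d => Q a b c d * (g a * g c * g d)) <= rsum N g ^ 3).
  { rewrite <- cube_sum. unfold R4. apply rsum_le; intros a Ha'.
    rewrite rsum_swap. apply rsum_le; intros c Hc'.
    rewrite rsum_swap. apply rsum_le; intros d Hd'. apply inner_le; auto.
    apply Rmult_le_pos; [apply Rmult_le_pos|]; auto. }
  assert (T4 : R4 N (fun a b c d => Q a b c d * (g b * g c * g d)) <= rsum N g ^ 3).
  { rewrite <- cube_sum. unfold R4.
    rewrite rsum_swap. apply rsum_le; intros b Hb'.
    rewrite rsum_swap. apply rsum_le; intros c Hc'.
    rewrite rsum_swap. apply rsum_le; intros d Hd'. apply inner_le; auto.
    apply Rmult_le_pos; [apply Rmult_le_pos|]; auto. }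
  fold g. lra.
Qed.

Lemma uniq_sum n (b : nat -> bool) :
  (forall d d', (d < d' < n)%nat -> b d = true -> b d' = true -> False) ->
  rsum n (fun d => if b d then 1 else 0) <= 1.
Proof.
  induction n; intros H; simpl; [lra|].
  destruct (b n) eqn:E.
  - rewrite (rsum_ext _ _ (fun _ => 0)), rsum_zero; [lra|].
    intros k Hk. destruct (b k) eqn:E'; auto. exfalso; apply (H k n); auto.
  - rewrite Rplus_0_r. apply IHn. intros d d' Hd. apply H. lia.
Qed.

Lemma ind_sum_le1 N (e s : Z) : (s = 1 \/ s = -1)%Z -> (0 < N)%nat ->
  rsum N (fun d => indN N (e + s * Z.of_nat d)) <= 1.
Proof.
  intros Hs HN. unfold indN. apply uniq_sum. intros d d' Hd E1 E2.
  apply Z.eqb_eq in E1. apply Z.eqb_eq in E2.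
  apply Z.mod_divide in E1; [|lia]. apply Z.mod_divide in E2; [|lia].
  destruct E1 as [q1 H1]. destruct E2 as [q2 H2].
  assert (Hx : (s * (Z.of_nat d' - Z.of_nat d) = (q2 - q1) * Z.of_nat N)%Z) by lia.
  destruct (Z.lt_trichotomy (q2 - q1) 0) as [L|[L|L]]; destruct Hs; subst s; nia.
Qed.

Definition Q1 N a b c d := indN N (dz a c + dz b d).
Definition Q2 N a b c d := indN N (dz a c - dz b d).

Ltac rw_ind N e s := apply Rle_trans with (rsum N (fun x => indN N (e + s * Z.of_nat x))); 
  [right; apply rsum_ext; intros; f_equal; unfold dz; lia | apply ind_sum_le1; auto].

Lemma young_full N F h : (0 < N)%nat -> (forall k, 0 <= F k) -> (forall k, h k ^ 3 = F k ^ 2) ->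
  R4 N (fun a b c d => (Q1 N a b c d + Q2 N a b c d) * (F a * F b * F c * F d)) <= 2 * rsum N (fun k => h k ^ 2) ^ 3.
Proof.
  intros HN HF Hh.
  replace (R4 N (fun a b c d => (Q1 N a b c d + Q2 N a b c d) * (F a * F b * F c * F d))) with
    (R4 N (fun a b c d => Q1 N a b c d * (F a * F b * F c * F d)) + R4 N (fun a b c d => Q2 N a b c d * (F a * F b * F c * F d))).
  2:{ rewrite <- R4_plus. unfold R4. repeat (apply rsum_ext; intros). ring. }
  assert (0 < Z.of_nat N)%Z by lia.
  assert (Y1 : R4 N (fun a b c d => Q1 N a b c d * (F a * F b * F c * F d)) <= rsum N (fun k => h k ^ 2) ^ 3).
  { apply young; auto; unfold Q1.
    - intros; apply indN_nonneg.
    - intros a b c _ _ _. rw_ind N (Z.of_nat a - Z.of_nat c + Z.of_nat b)%Z (-1)%Z.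
    - intros a b d _ _ _. rw_ind N (Z.of_nat a + Z.of_nat b - Z.of_nat d)%Z (-1)%Z.
    - intros a c d _ _ _. rw_ind N (Z.of_nat a - Z.of_nat c - Z.of_nat d)%Z (1)%Z.
    - intros b c d _ _ _. rw_ind N (Z.of_nat b - Z.of_nat c - Z.of_nat d)%Z (1)%Z. }
  assert (Y2 : R4 N (fun a b c d => Q2 N a b c d * (F a * F b * F c * F d)) <= rsum N (fun k => h k ^ 2) ^ 3).
  { apply young; auto; unfold Q2.
    - intros; apply indN_nonneg.
    - intros a b c _ _ _. rw_ind N (Z.of_nat a - Z.of_nat c - Z.of_nat b)%Z (1)%Z.
    - intros a b d _ _ _. rw_ind N (Z.of_nat a - Z.of_nat b + Z.of_nat d)%Z (-1)%Z.
    - intros a c d _ _ _. rw_ind N (Z.of_nat a - Z.of_nat c + Z.of_nat d)%Z (-1)%Z.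
    - intros b c d _ _ _. rw_ind N (- Z.of_nat b - Z.of_nat c + Z.of_nat d)%Z (1)%Z. }
  lra.
Qed.

Lemma rsum_reflect N f : (0 < N)%nat -> rsum N f = rsum N (fun k => f ((N - k) mod N)%nat).
Proof.
  intros HN. destruct N as [|M]; [lia|].
  rewrite !rsum_shift. f_equal.
  - rewrite Nat.sub_0_r, Nat.Div0.mod_same. reflexivity.
  - rewrite rsum_rev. apply rsum_ext; intros k Hk. f_equal.
    rewrite Nat.mod_small by lia. lia.
Qed.

Lemma ss_refl N j k : (0 < k)%nat -> (k < N)%nat -> ss N j (N - k) = - ss N j k.
Proof.
  intros H1 H2. assert (0 < INR N) by (apply lt_0_INR; lia). unfold ss. rewrite minus_INR by lia.
  replace (2 * PI * INR j * (INR N - INR k) / INR N) with (- (2 * PI * INR j * INR k / INR N) + 2 * INR j * PI) by (field; lra).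
  rewrite sin_period, sin_neg. reflexivity.
Qed.

Lemma cc_refl N j k : (0 < k)%nat -> (k < N)%nat -> cc N j (N - k) = cc N j k.
Proof.
  intros H1 H2. assert (0 < INR N) by (apply lt_0_INR; lia). unfold cc. rewrite minus_INR by lia.
  replace (2 * PI * INR j * (INR N - INR k) / INR N) with (- (2 * PI * INR j * INR k / INR N) + 2 * INR j * PI) by (field; lra).
  rewrite cos_period, cos_neg. reflexivity.
Qed.

Lemma Sj_zero N zr zi j : (0 < N)%nat -> in_hatR N zr zi -> Sj N zr zi j = 0.
Proof.
  intros HN Hh. unfold Sj. set (t := fun k => ss N j k * zr k + cc N j k * zi k).
  assert (E : rsum N t = rsum N (fun k => - t k)).
  { rewrite rsum_reflect by auto. apply rsum_ext; intros k Hk.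
    destruct (Hh k Hk) as [Hr Hi]. destruct k as [|k].
    - rewrite Nat.sub_0_r, Nat.Div0.mod_same in *. unfold t.
      assert (zi 0%nat = 0) by lra. rewrite H. unfold ss. simpl. rewrite Rmult_0_r, Rdiv_0_l, sin_0. ring.
    - rewrite Nat.mod_small in * by lia. unfold t. rewrite ss_refl, cc_refl by lia.
      rewrite <- Hr. replace (zi (N - S k)%nat) with (- zi (S k)) by lra. ring. }
  rewrite rsum_opp in E. fold t. lra.
Qed.

Lemma xofz_Cj N zr zi j : xofz N zr zi j = Cj N zr zi j.
Proof. reflexivity. Qed.

Lemma Cj_mod N zr zi m : (0 < N)%nat -> Cj N zr zi (m mod N) = Cj N zr zi m.
Proof.
  intros HN. assert (0 < INR N) by (apply lt_0_INR; lia).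
  pose proof (Nat.div_mod m N ltac:(lia)) as Hm. set (q := (m / N)%nat) in *. set (r := (m mod N)%nat) in *.
  unfold Cj. apply rsum_ext; intros k _. unfold cc, ss.
  assert (E : 2 * PI * INR m * INR k / INR N = 2 * PI * INR r * INR k / INR N + 2 * INR (q * k) * PI).
  { rewrite Hm, plus_INR, !mult_INR. field. lra. }
  rewrite E, cos_period, sin_period. reflexivity.
Qed.

Definition bet N k := 2 * PI * INR k / INR N.
Definition wR N (zr zi : nat -> R) k := (1 - cos (bet N k)) * zr k + sin (bet N k) * zi k.
Definition wI N (zr zi : nat -> R) k := (1 - cos (bet N k)) * zi k - sin (bet N k) * zr k.

Lemma cc_S N j k : (0 < N)%nat -> cc N (S j) k = cc N j k * cos (bet N k) - ss N j k * sin (bet N k).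
Proof.
  intros HN. assert (0 < INR N) by (apply lt_0_INR; lia). unfold cc, ss, bet. rewrite <- cos_plus. f_equal. rewrite S_INR. field. lra.
Qed.
Lemma ss_S N j k : (0 < N)%nat -> ss N (S j) k = ss N j k * cos (bet N k) + cc N j k * sin (bet N k).
Proof.
  intros HN. assert (0 < INR N) by (apply lt_0_INR; lia). unfold cc, ss, bet. rewrite <- sin_plus. f_equal. rewrite S_INR. field. lra.
Qed.

Lemma Cj_diff N zr zi j : (0 < N)%nat -> Cj N zr zi j - Cj N zr zi (S j) = Cj N (wR N zr zi) (wI N zr zi) j.
Proof.
  intros HN. unfold Cj. rewrite <- rsum_minus. apply rsum_ext; intros k _.
  rewrite cc_S, ss_S by auto. unfold wR, wI. ring.
Qed.
Lemma Sj_diff N zr zi j : (0 < N)%nat -> Sj N zr zi j - Sj N zr zi (S j) = Sj N (wR N zr zi) (wI N zr zi) j.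
Proof.
  intros HN. unfold Sj. rewrite <- rsum_minus. apply rsum_ext; intros k _.
  rewrite cc_S, ss_S by auto. unfold wR, wI. ring.
Qed.

Lemma w_abs N zr zi k : (0 < N)%nat -> wR N zr zi k ^ 2 + wI N zr zi k ^ 2 = 4 * sin (INR k * PI / INR N) ^ 2 * cabs2 zr zi k.
Proof.
  intros HN. assert (0 < INR N) by (apply lt_0_INR; lia).
  assert (E : cos (bet N k) = 1 - 2 * sin (INR k * PI / INR N) * sin (INR k * PI / INR N)).
  { rewrite <- cos_2a_sin. unfold bet. f_equal. field. lra. }
  assert (P : sin (bet N k) ^ 2 + cos (bet N k) ^ 2 = 1) by (rewrite <- !Rsqr_pow2; apply sin2_cos2).
  unfold wR, wI, cabs2.
  transitivity (((1 - cos (bet N k))^2 + sin (bet N k)^2) * (zr k ^ 2 + zi k ^ 2)); [ring|].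
  f_equal. replace (sin (bet N k) ^ 2) with (1 - cos (bet N k) ^ 2) by lra. rewrite E. ring.
Qed.

Lemma sum_x2 N zr zi : (0 < N)%nat -> in_hatR N zr zi ->
  rsum N (fun j => xofz N zr zi j ^ 2) = INR N * rsum N (fun k => cabs2 zr zi k).
Proof.
  intros HN Hh. unfold cabs2. rewrite <- (parseval N zr zi) by auto. apply rsum_ext; intros j _.
  rewrite xofz_Cj, Sj_zero by auto. ring.
Qed.

Lemma sum_dx2 N zr zi : (0 < N)%nat -> in_hatR N zr zi ->
  rsum N (fun j => (xofz N zr zi j - xofz N zr zi ((S j) mod N)) ^ 2) =
  INR N * rsum N (fun k => 4 * sin (INR k * PI / INR N) ^ 2 * cabs2 zr zi k).
Proof.
  intros HN Hh.
  rewrite (rsum_ext _ (fun k => 4 * _ * _) (fun k => wR N zr zi k ^ 2 + wI N zr zi k ^ 2)) by (intros; rewrite w_abs; auto).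
  rewrite <- (parseval N (wR N zr zi) (wI N zr zi)) by auto. apply rsum_ext; intros j _.
  rewrite !xofz_Cj, Cj_mod, Cj_diff by auto.
  rewrite <- Sj_diff, !Sj_zero by auto. ring.
Qed.

Lemma diff_id N g zr zi : (0 < N)%nat -> in_hatR N zr zi ->
  Gtilde g N zr zi - F0 g N zr zi = / (4 * INR N) * rsum N (fun j => xofz N zr zi j ^ 4).
Proof.
  intros HN Hh. assert (0 < INR N) by (apply lt_0_INR; lia).
  unfold Gtilde, G_N, F_energy, F0, lam.
  rewrite sum_dx2 by auto.
  rewrite rsum_minus, (rsum_scal N (/4) (fun i => xofz N zr zi i ^ 4)), (rsum_scal N (/2) (fun i => xofz N zr zi i ^ 2)).
  rewrite sum_x2 by auto.
  set (s2 := fun k => sin (INR k * PI / INR N) ^ 2 * cabs2 zr zi k).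
  rewrite (rsum_ext _ (fun k => 4 * _ * _) (fun k => 4 * s2 k)) by (intros; unfold s2; ring).
  rewrite (rsum_ext _ (fun k => (-1 + _) * _) (fun k => (-1) * cabs2 zr zi k + (2 * g) * s2 k)) by (intros; unfold s2; ring).
  rewrite rsum_plus, !rsum_scal. change (fun k : nat => cabs2 zr zi k) with (cabs2 zr zi). field. lra.
Qed.


Lemma quartic_final N zr zi (Fb h : nat -> R) : (0 < N)%nat ->
  (forall k, (k < N)%nat -> fn zr zi k <= Fb k) -> (forall k, 0 <= Fb k) -> (forall k, h k ^ 3 = Fb k ^ 2) ->
  rsum N (fun j => xofz N zr zi j ^ 4) <= 2 * INR N * rsum N (fun k => h k ^ 2) ^ 3.
Proof.
  intros HN Hf HF Hh. assert (0 < INR N) by (apply lt_0_INR; lia).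
  eapply Rle_trans.
  { apply (rsum_le _ _ (fun j => (Cj N zr zi j ^ 2 + Sj N zr zi j ^ 2) ^ 2)). intros j _.
    rewrite xofz_Cj. pose proof (pow2_ge_0 (Cj N zr zi j)). pose proof (pow2_ge_0 (Sj N zr zi j)).
    replace (Cj N zr zi j ^ 4) with ((Cj N zr zi j ^ 2) ^ 2) by ring. nra. }
  eapply Rle_trans; [apply quartic; auto|].
  replace (2 * INR N * rsum N (fun k => h k ^ 2) ^ 3) with (INR N * (2 * rsum N (fun k => h k ^ 2) ^ 3)) by ring. apply Rmult_le_compat_l; [lra|].
  eapply Rle_trans; [|apply (young_full N Fb h); auto].
  unfold R4. repeat (apply rsum_le; intros). unfold Q1, Q2.
  pose proof (indN_nonneg N (dz k k1 + dz k0 k2)). pose proof (indN_nonneg N (dz k k1 - dz k0 k2)).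
  apply Rmult_le_compat_l; [lra|].
  pose proof (fn_nonneg zr zi k). pose proof (fn_nonneg zr zi k0). pose proof (fn_nonneg zr zi k1). pose proof (fn_nonneg zr zi k2).
  repeat apply Rmult_le_compat; auto; repeat apply Rmult_le_pos; auto.
Qed.

Lemma sin_lower a : 0 <= a -> a <= 2 -> a / 3 <= sin a.
Proof.
  intros H1 H2.
  destruct (SIN a H1) as [L _]. { pose proof PI_RGT_0. pose proof (PI2_3_2). lra. }
  unfold sin_lb, sin_approx, sin_term in L. simpl in L. unfold Rdiv in L.
  eapply Rle_trans; [|exact L].
  assert (a * a <= 4) by nra.
  assert (0 <= a ^ 5 * (/120 - a*a / 5040)) by (apply Rmult_le_pos; [apply pow_le; lra| lra]).
  simpl in *. nra.
Qed.

Lemma lam_low mu N m : 1 < mu -> (3 <= N)%nat -> (1 <= m)%nat -> (2 * m <= N)%nat ->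
  (mu - 1) * INR m ^ 2 / 9 <= lam (mu * gamma1 N) N m.
Proof.
  intros Hmu HN Hm1 Hm2.
  assert (HNr : 3 <= INR N) by (replace 3 with (INR 3) by (simpl; ring); apply le_INR; auto).
  assert (Hmr : 1 <= INR m) by (replace 1 with (INR 1) by reflexivity; apply le_INR; auto).
  assert (Hm2r : 2 * INR m <= INR N) by (replace (2 * INR m) with (INR (2 * m)) by (rewrite mult_INR; reflexivity); apply le_INR; auto).
  pose proof PI_RGT_0. pose proof PI_4. pose proof PI2_3_2.
  set (x1 := PI / INR N). set (xm := INR m * PI / INR N).
  assert (Ex : xm = INR m * x1) by (unfold xm, x1; field; lra).
  assert (Hx1 : 0 < x1) by (unfold x1; apply Rdiv_lt_0_compat; lra).
  assert (Hxm : xm <= PI / 2).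
  { unfold xm. apply (Rmult_le_reg_r (INR N)); [lra|]. unfold Rdiv. rewrite Rmult_assoc, Rinv_l by lra. nra. }
  assert (Hx1m : x1 <= xm) by (rewrite Ex; nra).
  set (s1 := sin x1). set (sm := sin xm).
  assert (Hs1 : 0 < s1) by (apply sin_gt_0; lra).
  assert (Hs1x : s1 < x1) by (apply sin_lt_x; lra).
  assert (Hsm1 : s1 <= sm) by (apply sin_incr_1; lra).
  assert (Hsmx : xm / 3 <= sm) by (apply sin_lower; lra).
  assert (K1 : s1 ^ 2 <= sm ^ 2) by nra.
  assert (K2 : INR m ^ 2 / 9 * s1 ^ 2 <= sm ^ 2).
  { assert (INR m ^ 2 / 9 * s1 ^ 2 <= INR m ^ 2 / 9 * x1 ^ 2) by (apply Rmult_le_compat_l; [nra|nra]).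
    assert (INR m ^ 2 / 9 * x1 ^ 2 = (xm/3)^2) by (rewrite Ex; field).
    assert (0 <= xm / 3) by (rewrite Ex; nra).
    assert ((xm/3)^2 <= sm^2) by nra. lra. }
  unfold lam, gamma1. fold x1. fold s1. change (sin (INR m * PI / INR N)) with sm.
  replace (-1 + 2 * (mu * / (2 * s1 ^ 2)) * sm ^ 2) with ((- s1 ^ 2 + mu * sm ^ 2) / s1 ^ 2) by (field; lra).
  assert (Key : (mu - 1) * INR m ^ 2 / 9 * s1 ^ 2 <= - s1 ^ 2 + mu * sm ^ 2).
  { assert ((mu - 1) * (INR m ^ 2 / 9 * s1 ^ 2) <= (mu - 1) * sm ^ 2) by (apply Rmult_le_compat_l; lra). nra. }
  replace ((mu - 1) * INR m ^ 2 / 9) with ((mu - 1) * INR m ^ 2 / 9 * s1 ^ 2 / s1 ^ 2) by (field; lra).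
  unfold Rdiv at 1 3. apply Rmult_le_compat_r; [|exact Key].
  apply Rlt_le, Rinv_0_lt_compat. nra.
Qed.

Lemma lam_sym g N k : (k <= N)%nat -> (0 < N)%nat -> lam g N (N - k) = lam g N k.
Proof.
  intros H HN. assert (0 < INR N) by (apply lt_0_INR; lia). unfold lam. rewrite minus_INR by auto.
  replace ((INR N - INR k) * PI / INR N) with (PI - INR k * PI / INR N) by (field; lra).
  rewrite sin_PI_x. reflexivity.
Qed.

Lemma ak_le mu N m r : 1 < mu -> (3 <= N)%nat -> (1 <= m)%nat -> (2 * m <= N)%nat -> 0 < r ->
  r / sqrt (Rabs (lam (mu * gamma1 N) N m)) <= 3 / sqrt (mu - 1) * (r / INR m) /\
  0 < lam (mu * gamma1 N) N m.
Proof.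
  intros Hmu HN Hm1 Hm2 Hr. pose proof (lam_low mu N m Hmu HN Hm1 Hm2) as HL.
  assert (Hmr : 1 <= INR m) by (replace 1 with (INR 1) by reflexivity; apply le_INR; auto).
  set (L := lam (mu * gamma1 N) N m) in *.
  assert (HL0 : 0 < (mu - 1) * INR m ^ 2 / 9) by (apply Rdiv_lt_0_compat; [apply Rmult_lt_0_compat; [lra| apply pow_lt; lra]|lra]).
  split; [|lra].
  rewrite Rabs_pos_eq by lra.
  assert (Hs : sqrt (mu - 1) * INR m / 3 <= sqrt L).
  { replace (sqrt (mu - 1) * INR m / 3) with (sqrt ((mu - 1) * INR m ^ 2 / 9)).
    - apply sqrt_le_1_alt. auto.
    - replace ((mu - 1) * INR m ^ 2 / 9) with ((mu - 1) * (INR m / 3) ^ 2) by field.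
      rewrite sqrt_mult_alt by lra. rewrite sqrt_pow2 by lra. field. }
  assert (Hq : 0 < sqrt (mu - 1)) by (apply sqrt_lt_R0; lra).
  assert (0 < sqrt (mu - 1) * INR m / 3) by (apply Rdiv_lt_0_compat; [apply Rmult_lt_0_compat|]; lra).
  replace (3 / sqrt (mu - 1) * (r / INR m)) with (r / (sqrt (mu - 1) * INR m / 3)) by (field; lra).
  unfold Rdiv at 1 2. apply Rmult_le_compat_l; [lra|]. apply Rinv_le_contravar; auto.
Qed.

Definition ak rho mu N k := rkN rho N k / sqrt (Rabs (lam (mu * gamma1 N) N k)).
Definition bb (rho : nat -> R) m := Rpower (rho m / INR m) (4/3).

Lemma bb_pos rho m : 0 < bb rho m.
Proof. unfold bb, Rpower. apply exp_pos. Qed.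

Lemma ak0 rho mu N : ak rho mu N 0 = 1.
Proof. unfold ak, rkN, lam. simpl. rewrite Rmult_0_l, Rdiv_0_l, sin_0. replace (-1 + 2 * (mu * gamma1 N) * 0 ^ 2) with (-1) by ring.
  rewrite Rabs_left by lra. match goal with |- context [sqrt ?x] => replace x with 1 by ring end. rewrite sqrt_1. field. Qed.

Lemma ak_props mu rho N k : 1 < mu -> (forall k, (1 <= k)%nat -> 0 < rho k) -> (3 <= N)%nat -> (1 <= k)%nat -> (k < N)%nat ->
  0 < ak rho mu N k /\ Rpower (ak rho mu N k) (4/3) <= Rpower (3 / sqrt (mu - 1)) (4/3) * (bb rho k + bb rho (N - k)).
Proof.
  intros Hmu Hpos HN Hk1 HkN.
  assert (Hdiv := Nat.div_mod N 2 ltac:(lia)). assert (Hmod := Nat.mod_upper_bound N 2 ltac:(lia)).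
  assert (Hc0 : 0 < 3 / sqrt (mu - 1)) by (apply Rdiv_lt_0_compat; [lra| apply sqrt_lt_R0; lra]).
  assert (G : forall m, (1 <= m)%nat -> (2 * m <= N)%nat -> ak rho mu N k = rho m / sqrt (Rabs (lam (mu * gamma1 N) N m)) ->
     0 < ak rho mu N k /\ Rpower (ak rho mu N k) (4/3) <= Rpower (3 / sqrt (mu - 1)) (4/3) * bb rho m).
  { intros m Hm1 Hm2 E. destruct (ak_le mu N m (rho m) Hmu HN Hm1 Hm2 (Hpos m Hm1)) as [B P].
    assert (Ha : 0 < ak rho mu N k).
    { rewrite E. apply Rdiv_lt_0_compat; [apply Hpos; auto|]. apply sqrt_lt_R0. rewrite Rabs_pos_eq; lra. }
    split; auto. unfold bb. rewrite Rpower_mult_distr; auto.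
    - apply Rle_Rpower_l; [lra|]. split; auto. rewrite E; auto.
    - apply Rdiv_lt_0_compat; [apply Hpos; auto| apply lt_0_INR; lia]. }
  pose proof (bb_pos rho k). pose proof (bb_pos rho (N - k)).
  assert (0 < Rpower (3 / sqrt (mu - 1)) (4/3)) by (unfold Rpower; apply exp_pos).
  destruct (Nat.leb k (N / 2)) eqn:E.
  - apply Nat.leb_le in E. destruct (G k) as [G1 G2]; auto; [lia| |].
    { unfold ak, rkN. replace (Nat.eqb k 0) with false by (symmetry; apply Nat.eqb_neq; lia).
      replace (Nat.leb k (N/2)) with true by (symmetry; apply Nat.leb_le; auto). reflexivity. }
    split; auto. nra.
  - apply Nat.leb_gt in E. destruct (G (N - k)%nat) as [G1 G2]; auto; [lia|lia| |].
    { unfold ak, rkN. replace (Nat.eqb k 0) with false by (symmetry; apply Nat.eqb_neq; lia).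
      replace (Nat.leb k (N/2)) with false by (symmetry; apply Nat.leb_gt; auto). rewrite lam_sym by lia. reflexivity. }
    split; auto. nra.
Qed.

Lemma rsum_sumf n f : rsum (S n) f = sum_f_R0 f n.
Proof. induction n; simpl in *; [ring|]. rewrite <- IHn. reflexivity. Qed.

Lemma Tbound mu rho : 1 < mu -> (forall k, (1 <= k)%nat -> 0 < rho k) -> K_finite (4/3) rho ->
  exists Tm, 0 <= Tm /\ forall N, (3 <= N)%nat -> rsum N (fun k => Rpower (ak rho mu N k) (4/3)) <= Tm.
Proof.
  intros Hmu Hpos [l Hl].
  set (u := fun n => sum_f_R0 (fun k => Rpower (rho (S k) / INR (S k)) (4 / 3)) n) in *.
  assert (Hg : Un_growing u).
  { intros n. unfold u. rewrite tech5. pose proof (bb_pos rho (S (S n))). unfold bb in H. lra. }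
  pose proof (growing_ineq u l Hg Hl) as Hul.
  assert (Hu0 : 0 < u 0%nat) by (unfold u; simpl; apply (bb_pos rho 1)).
  set (Cp := Rpower (3 / sqrt (mu - 1)) (4/3)).
  assert (HCp : 0 < Cp) by (unfold Cp, Rpower; apply exp_pos).
  exists (1 + Cp * (2 * l)). split. { pose proof (Hul 0%nat). assert (0 <= Cp * (2*l)) by (apply Rmult_le_pos; lra). lra. }
  intros N HN. destruct N as [|M]; [lia|].
  rewrite rsum_shift, ak0. replace (Rpower 1 (4/3)) with 1 by (unfold Rpower; rewrite ln_1, Rmult_0_r, exp_0; reflexivity).
  apply Rplus_le_compat_l.
  eapply Rle_trans.
  { apply (rsum_le _ _ (fun k => Cp * (bb rho (S k) + bb rho (S M - S k)))). intros k Hk.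
    apply ak_props; auto; lia. }
  rewrite rsum_scal, rsum_plus. apply Rmult_le_compat_l; [lra|].
  assert (E : rsum M (fun k => bb rho (S M - S k)) = rsum M (fun k => bb rho (S k))).
  { rewrite rsum_rev. apply rsum_ext; intros k Hk. f_equal. lia. }
  rewrite E. destruct M as [|M']; [lia|]. rewrite rsum_sumf.
  pose proof (Hul M'). unfold u in H. fold (bb rho) in H. unfold bb in *. lra.
Qed.

Lemma rpow_nat x p n : 0 < x -> Rpower x p ^ n = Rpower x (p * INR n).
Proof.
  intros Hx. rewrite <- Rpower_pow by (unfold Rpower; apply exp_pos). apply Rpower_mult.
Qed.

Lemma rpow23_cube x : 0 < x -> Rpower x (2/3) ^ 3 = x ^ 2.
Proof. intros Hx. rewrite rpow_nat by auto. rewrite <- Rpower_pow by auto. f_equal. simpl. field. Qed.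

Lemma rpow23_sq x : 0 < x -> Rpower x (2/3) ^ 2 = Rpower x (4/3).
Proof. intros Hx. rewrite rpow_nat by auto. f_equal. simpl. field. Qed.

Lemma rpow43_cube x : 0 < x -> Rpower x (4/3) ^ 3 = x ^ 4.
Proof. intros Hx. rewrite rpow_nat by auto. rewrite <- Rpower_pow by auto. f_equal. simpl. field. Qed.

Theorem lemma4p5 (mu : R) (rho : nat -> R)
  (Hmu : 1 < mu)
  (Hpos : forall k : nat, (1 <= k)%nat -> 0 < rho k)
  (Hincr : forall k : nat, (1 <= k)%nat -> rho k <= rho (S k))
  (HK : K_finite (4 / 3) rho) :
  exists A1 delta0 : R, 0 < delta0 /\
    forall (N : nat) (delta : R) (zr zi : nat -> R),
      (3 <= N)%nat -> 0 < delta -> delta < delta0 ->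
      in_Cdelta (mu * gamma1 N) rho N delta zr zi ->
      Rabs (Gtilde (mu * gamma1 N) N zr zi - F0 (mu * gamma1 N) N zr zi) <= A1 * delta ^ 4.
Proof.
  destruct (Tbound mu rho Hmu Hpos HK) as [Tm [HTm HT]].
  exists (Tm ^ 3 / 2), 1. split; [lra|].
  intros N delta zr zi HN Hd Hd1 [Hh Hb].
  assert (HN0 : (0 < N)%nat) by lia. assert (HNr : 0 < INR N) by (apply lt_0_INR; lia).
  set (a := ak rho mu N).
  assert (Ha : forall k, (k < N)%nat -> 0 < a k).
  { intros k Hk. destruct k as [|k]. { unfold a. rewrite ak0. lra. }
    apply (ak_props mu rho N (S k)); auto; lia. }
  set (Fb := fun k => if Nat.ltb k N then delta * a k else 0).
  set (h := fun k => if Nat.ltb k N then Rpower (delta * a k) (2/3) else 0).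
  assert (HF : forall k, 0 <= Fb k).
  { intros k. unfold Fb. destruct (Nat.ltb_spec k N); [|lra]. apply Rlt_le, Rmult_lt_0_compat; auto. }
  assert (Hh3 : forall k, h k ^ 3 = Fb k ^ 2).
  { intros k. unfold h, Fb. destruct (Nat.ltb_spec k N); [|simpl; ring].
    apply rpow23_cube. apply Rmult_lt_0_compat; auto. }
  assert (Hf : forall k, (k < N)%nat -> fn zr zi k <= Fb k).
  { intros k Hk. unfold Fb. destruct (Nat.ltb_spec k N); [|lia].
    pose proof (Hb k Hk) as B. unfold fn. unfold cabs2 in B. unfold a, ak. unfold Rdiv in *. rewrite <- Rmult_assoc. exact B. }
  pose proof (quartic_final N zr zi Fb h HN0 Hf HF Hh3) as Q.
  set (S := rsum N (fun k => h k ^ 2)) in Q.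
  assert (ES : S = Rpower delta (4/3) * rsum N (fun k => Rpower (a k) (4/3))).
  { unfold S. rewrite <- rsum_scal. apply rsum_ext; intros k Hk. unfold h.
    destruct (Nat.ltb_spec k N); [|lia]. rewrite rpow23_sq by (apply Rmult_lt_0_compat; auto).
    symmetry. apply Rpower_mult_distr; auto. }
  assert (HS0 : 0 <= S) by (unfold S; apply rsum_nonneg; intros; apply pow2_ge_0).
  assert (Hd43 : 0 < Rpower delta (4/3)) by (unfold Rpower; apply exp_pos).
  assert (HS : S <= Rpower delta (4/3) * Tm).
  { rewrite ES. apply Rmult_le_compat_l; [lra|]. apply HT; auto. }
  assert (HS3 : S ^ 3 <= delta ^ 4 * Tm ^ 3).
  { rewrite <- rpow43_cube by auto. rewrite <- Rpow_mult_distr. apply pow_incr. lra. }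
  rewrite diff_id by auto.
  assert (Hx4 : 0 <= rsum N (fun j => xofz N zr zi j ^ 4)).
  { apply rsum_nonneg; intros. replace (xofz N zr zi k ^ 4) with ((xofz N zr zi k ^ 2) ^ 2) by ring. apply pow2_ge_0. }
  rewrite Rabs_pos_eq.
  2:{ apply Rmult_le_pos; auto. apply Rlt_le, Rinv_0_lt_compat. lra. }
  apply Rle_trans with (/ (4 * INR N) * (2 * INR N * S ^ 3)).
  { apply Rmult_le_compat_l; auto. apply Rlt_le, Rinv_0_lt_compat. lra. }
  replace (/ (4 * INR N) * (2 * INR N * S ^ 3)) with (S ^ 3 / 2) by (field; lra).
  lra.
Qed.
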